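(* Let $\boldsymbol{Y}_t$ be an $n\times 1$ vector of observed variables generated by the structural vector moving average model $$\boldsymbol{Y}_t=\boldsymbol{\Theta}(L)\boldsymbol{\varepsilon}_t=\sum_{j=0}^{\infty}\boldsymbol{\Theta}_j\boldsymbol{\varepsilon}_{t-j},$$ where $\boldsymbol{\varepsilon}_t=(\varepsilon_{1,t},\dots,\varepsilon_{m,t})'$ is an $m\times1$ vector of unobserved structural shocks with $E[\boldsymbol{\varepsilon}_t]=0$, $E[\boldsymbol{\varepsilon}_t\boldsymbol{\varepsilon}_t']>0$ and mutually uncorrelated components, and each $\boldsymbol{\Theta}_h$ is an $n\times m$ matrix. Let $x_t$ be the first element and $y_t$ the last element of $\boldsymbol{Y}_t$, let $\theta_{h,xs}$ denote the $(1,s)$-th element and $\theta_{h,ys}$ the $(n,s)$-th element of $\boldsymbol{\Theta}_h$. Fix $1\le S\le m$, let $\xi_t=\sum_{s=1}^{S}\varepsilon_{s,t}$, and assume the unit effect normalization $\theta_{0,xs}=1$ for all $s=1,\dots,S$. Let $z_t$ be a random variable satisfying: (i) $E[z_t\xi_t]\neq 0$; (ii) $E[z_t\varepsilon_{s,t}]=0$ for all $s=S+1,\dots,m$; (iii) $E[z_t\boldsymbol{\varepsilon}_{t+j}]=0$ for all $j\neq 0$. Write $\alpha_s=E[z_t\varepsilon_{s,t}]$ for $s=1,\dots,S$. Then for every $h=0,1,2,\dots$, $$\beta_h\equiv\frac{Cov(y_{t+h},z_t)}{Cov(x_t,z_t)}=\sum_{s=1}^{S}w_s\theta_{h,ys},\qquad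 w_s=\frac{\alpha_s}{\sum_{s'=1}^{S}\alpha_{s'}}.$$ Furthermore, if in addition either $\alpha_s\ge 0$ for all $s=1,\dots,S$ or $\alpha_s\le 0$ for all $s=1,\dots,S$, then $w_s\ge 0$ for all $s=1,\dots,S$.
   Context: All moments involved are assumed finite and the moving average series is assumed to converge so that covariances can be computed term by term. $L$ is the lag operator and $\boldsymbol{\Theta}(L)=\boldsymbol{\Theta}_0+\boldsymbol{\Theta}_1L+\boldsymbol{\Theta}_2L^2+\cdots$. *)

(* Defs.v *)
From HB Require Import structures.
From mathcomp Require Import all_boot all_order all_algebra.
From mathcomp Require Import all_classical all_reals all_analysis.
Set Implicit Arguments. Unset Strict Implicit. Unset Printing Implicit Defensive.
Import Order.TTheory GRing.Theory Num.Theory.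
Local Open Scope ring_scope.

(* xi_t = sum_{s=1}^S eps_{s,t}  (shocks indexed by 'I_m, s = 1..S is val s < S) *)
Definition xi_shock {T : Type} {R : realType} {m : nat} (S : nat)
  (eps : 'I_m -> T -> R) : T -> R :=
  fun w => \sum_(s < m | (s < S)%N) eps s w.

(* alpha_s = E[z_t eps_{s,t}] (a finite real under the L2 hypotheses) *)
Definition alpha_coef {d} {T : measurableType d} {R : realType}
  (P : probability T R) {m : nat} (z : T -> R) (eps : 'I_m -> T -> R)
  (s : 'I_m) : R := fine ('E_P[(z * eps s)%R])%E.

Definition weight {R : realType} {m : nat} (S : nat) (alpha : 'I_m -> R)
  (s : 'I_m) : R := alpha s / \sum_(s' < m | (s' < S)%N) alpha s'.

(* real-valued covariance (finite under the L2 hypotheses) *)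
Definition cov {d} {T : measurableType d} {R : realType}
  (P : probability T R) (X Y : T -> R) : R := fine (covariance P X Y).

(* Main.v *)
Require Import Defs.
From HB Require Import structures.
From mathcomp Require Import all_boot all_order all_algebra.
From mathcomp Require Import all_classical all_reals all_analysis.
Import Order.TTheory GRing.Theory Num.Theory numFieldNormedType.Exports.
Local Open Scope classical_set_scope.
Local Open Scope ring_scope.

Theorem proposition1 (R : realType) (d : measure_display) (T : measurableType d)
  (P : probability T R) (n m S : nat)
  (Theta : nat -> 'M[R]_(n.+1, m))
  (eps : int -> 'I_m -> T -> R)
  (Y : int -> 'I_(n.+1) -> T -> R)
  (z : T -> R) (t : int)
  (* finite second moments *)
  (eps_L2 : forall u s, eps u s \in Lfun P 2%:E)
  (Y_L2 : forall u i, Y u i \in Lfun P 2%:E)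
  (z_L2 : z \in Lfun P 2%:E)
  (* structural shocks: mean zero, positive variances, mutually uncorrelated *)
  (eps_mean0 : forall u s, ('E_P[eps u s] = 0)%E)
  (eps_var_pos : forall u s, (0 < 'V_P[eps u s])%E)
  (eps_uncorr : forall u s s', s != s' -> covariance P (eps u s) (eps u s') = 0%E)
  (* Y_t = sum_j Theta_j eps_{t-j}, the series converging almost surely *)
  (Y_MA : forall u i, {ae P, forall w,
     (fun N : nat => \sum_(j < N) \sum_(s < m) Theta j i s * eps (u - j%:Z) s w)
       @ \oo --> Y u i w})
  (* covariances with z can be computed term by term *)
  (Y_cov_termwise : forall u i,
     (fun N : nat => \sum_(j < N) \sum_(s < m)
          Theta j i s * cov P (eps (u - j%:Z) s) z)
       @ \oo --> cov P (Y u i) z)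
  (S_ge1 : (1 <= S)%N) (S_lem : (S <= m)%N)
  (* unit effect normalization *)
  (unit_norm : forall s : 'I_m, (s < S)%N -> Theta 0%N ord0 s = 1)
  (* instrument conditions *)
  (z_rel : ('E_P[(z * xi_shock S (eps t))%R] != 0)%E)
  (z_exog : forall s : 'I_m, (S <= s)%N -> ('E_P[(z * eps t s)%R] = 0)%E)
  (z_lead_lag : forall (j : int) (s : 'I_m), j != 0 ->
     ('E_P[(z * eps (t + j) s)%R] = 0)%E) :
  (forall h : nat,
     cov P (Y (t + h%:Z) ord_max) z / cov P (Y t ord0) z
     = \sum_(s < m | (s < S)%N)
         weight S (alpha_coef P z (eps t)) s * Theta h ord_max s)
  /\
  ((forall s : 'I_m, (s < S)%N -> 0 <= alpha_coef P z (eps t) s) \/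
   (forall s : 'I_m, (s < S)%N -> alpha_coef P z (eps t) s <= 0) ->
   forall s : 'I_m, (s < S)%N -> 0 <= weight S (alpha_coef P z (eps t)) s).
Proof.
have L21 : forall f : T -> R, f \in Lfun P 2%:E -> f \in Lfun P 1.
  move=> f hf; apply: (Lfun_subset12 _ hf). first [by rewrite fin_num_measure | by have -> := probability_setT P | by apply: fin_num_measure].
have covE : forall u s, cov P (eps u s) z = fine ('E_P[(z * eps u s)%R])%E.
  move=> u s; rewrite /cov covarianceC covarianceE.
  - by rewrite eps_mean0 mule0 sube0.
  - exact: L21.
  - exact: L21.
  - exact: (Lfun2_mul_Lfun1 z_L2 (eps_L2 u s)).
set alpha := alpha_coef P z (eps t).
have alpha0 : forall s : 'I_m, (S <= s)%N -> alpha s = 0.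
  by move=> s hs; rewrite /alpha /alpha_coef z_exog.
have covY : forall (h : nat) i, cov P (Y (t + h%:Z) i) z
    = \sum_(s < m | (s < S)%N) Theta h i s * alpha s.
  move=> h i.
  have K : forall j, (j != h)%N -> forall s, cov P (eps (t + h%:Z - j%:Z) s) z = 0.
    move=> j hj s; rewrite covE.
    have -> : t + h%:Z - j%:Z = t + (h%:Z - j%:Z) by rewrite addrA.
    rewrite z_lead_lag //.
    by rewrite subr_eq0; apply/negP => /eqP [] /eqP; rewrite eq_sym (negbTE hj).
  have Ht := Y_cov_termwise (t + h%:Z) i.
  rewrite -(cvg_shiftn h.+1) in Ht.
  have Hc : [sequence \sum_(j < (n0 + h.+1)%N) \sum_(s < m)
       Theta j i s * cov P (eps (t + h%:Z - j%:Z) s) z]_n0 =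
       (fun _ => \sum_(s < m) Theta h i s * cov P (eps (t + h%:Z - h%:Z) s) z).
    apply/funext => N /=.
    have hlt : (h < N + h.+1)%N by rewrite addnS ltnS leq_addl.
    rewrite (bigD1 (Ordinal hlt)) //= [X in _ + X]big1 ?addr0 //.
    by move=> j hj; apply: big1 => s _; rewrite K ?mulr0.
  rewrite Hc in Ht.
  rewrite -(cvg_lim (@Rhausdorff R) Ht) (lim_cst (@Rhausdorff R)).
  have -> : t + h%:Z - h%:Z = t by rewrite addrK.
  rewrite [RHS]big_mkcond /=; apply: eq_bigr => s _.
  rewrite covE -/(alpha_coef P z (eps t) s) -/alpha.
  by case: ltnP => hs //; rewrite alpha0 // mulr0.
split.
  move=> h; rewrite covY.
  have -> : Y t = Y (t + 0%:Z) by rewrite addr0.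
  rewrite covY.
  under [X in _ / X]eq_bigr => s hs do rewrite unit_norm // mul1r.
  rewrite mulr_suml; apply: eq_bigr => s _.
  rewrite /weight [RHS]mulrC mulrA; congr (_ / _).
move=> H s hs; rewrite /weight -/alpha.
case: H => H.
  by apply: divr_ge0; [exact: H | apply: sumr_ge0 => i; exact: H].
apply: mulr_le0 => //; first exact: H.
by rewrite invr_le0; apply: sumr_le0 => i; exact: H.
Qed.
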